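(* Let $d>k\ge 0$ be integers with $d$ even and $k$ odd. Then $f(k,d)\le \frac{k+1}{d+2}$.
   Context: For a graph $G=(V,E)$ and an integer $k\ge 0$, a $k$-independent set is a set $S\subseteq V$ such that the induced subgraph $G[S]$ has maximum degree at most $k$; $\alpha_k(G)$ denotes the maximum cardinality of a $k$-independent set of $G$. $n(G)$ is the number of vertices and $d(G)=2|E(G)|/n(G)$ the average degree. For integers $d,k\ge 0$, $f(k,d)=\inf\left\{\frac{\alpha_k(G)}{n(G)} : G \text{ a finite simple graph with at least one vertex and } d(G)\le d\right\}$. *)

(* Defs.v *)
From HB Require Import structures.
From mathcomp Require Import all_boot all_order all_algebra.
Set Implicit Arguments. Unset Strict Implicit. Unset Printing Implicit Defensive.
Import Order.TTheory GRing.Theory Num.Theory.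

Definition simple_graph (T : finType) (e : rel T) : Prop :=
  symmetric e /\ irreflexive e.

Definition n_edges (T : finType) (e : rel T) : nat :=
  #|[set p : T * T | e p.1 p.2]| %/ 2.

Definition avg_degree (T : finType) (e : rel T) : rat :=
  ((2 * n_edges e)%:R / #|T|%:R)%R.

Definition k_independent (T : finType) (e : rel T) (k : nat) (S : {set T}) : bool :=
  [forall x in S, #|[set y in S | e x y]| <= k].

Definition alpha_k (T : finType) (e : rel T) (k : nat) : nat :=
  \max_(S : {set T} | k_independent e k S) #|S|.

(* Main.v *)
Require Import Defs.
From HB Require Import structures.
From mathcomp Require Import all_boot all_order all_algebra.
From mathcomp Require Import zify.
Import Order.TTheory GRing.Theory Num.Theory.

Section Constr.
Variable m : nat.
Local Notation VT := ('I_m * bool)%type.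
Definition ee : rel VT := [rel x y | x.1 != y.1].
Definition partner (x : VT) : VT := (x.1, ~~ x.2).

Lemma ee_simple : simple_graph ee.
Proof. by split; [move=> x y; rewrite /ee /= eq_sym | move=> x; rewrite /ee /= eqxx]. Qed.

Lemma deg_split (S : {set VT}) (x : VT) :
  #|[set y in S | ee x y]| + #|S :&: [set y | x.1 == y.1]| = #|S|.
Proof.
rewrite -(cardsID [set y | x.1 == y.1] S) addnC; congr (_ + _).
by apply: eq_card => y; rewrite !inE andbC.
Qed.

Lemma same_le2 (S : {set VT}) (x : VT) : #|S :&: [set y | x.1 == y.1]| <= 2.
Proof.
apply: (@leq_trans #|[set (x.1, true); (x.1, false)]|); last by rewrite cards2; case: (_ != _).
apply: subset_leq_card; apply/subsetP => [[i b]]; rewrite !inE /= => /andP[_ /eqP <-].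
by case: b; rewrite eqxx ?orbT.
Qed.

Lemma same_le1 (x : VT) (S : {set VT}) : partner x \notin S ->
  #|S :&: [set y | x.1 == y.1]| <= 1.
Proof.
case: x => i c hp; rewrite -(cards1 (i, c)); apply: subset_leq_card.
apply/subsetP => [[j b]].
rewrite !inE /= => /andP[hS /eqP hi]; subst j.
apply/eqP; congr pair; move: hp; rewrite /partner /=.
by case: b c hS => [] [] //= hS; rewrite hS.
Qed.

Lemma kind_bound (k : nat) (S : {set VT}) : odd k -> k_independent ee k S -> #|S| <= k.+1.
Proof.
move=> ok /forall_inP hS.
case: (boolP [exists x in S, partner x \notin S]).
  case/exists_inP => x xS px.
  have h1 : #|[set y in S | ee x y]| <= k := hS x xS.
  have := deg_split S x; have := @same_le1 x S px; lia.
rewrite negb_exists_in => /forall_inP hcl.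
have hcl' : forall x, x \in S -> partner x \in S by move=> x /hcl; rewrite negbK.
case: (set_0Vmem S) => [-> | [x xS]]; first by rewrite cards0.
have h1 : #|S| <= k.+2.
  have h2 : #|[set y in S | ee x y]| <= k := hS x xS.
  have := deg_split S x; have := same_le2 S x; lia.
have eqS : S = setX [set i | (i, true) \in S] [set: bool].
  apply/setP => [[i b]]; rewrite !inE andbT.
  case: b => //; apply/idP/idP => h; first exact: (hcl' (i, false) h).
  exact: (hcl' (i, true) h).
have hodd : ~~ odd #|S| by rewrite eqS cardsX cardsT card_bool oddM andbF.
have : #|S| != k.+2 by apply/eqP => h; move: hodd; rewrite h /= ok.
lia.
Qed.

Lemma nedges_bound : #|[set p : VT * VT | ee p.1 p.2]| + #|{: VT}| * 2 <= #|{: VT}| * #|{: VT}|.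
Proof.
rewrite -card_prod -(cardsC [set p : VT * VT | ee p.1 p.2]) leq_add2l.
have -> : #|{: VT}| * 2 = #|{: VT * bool}| by rewrite [RHS]card_prod card_bool.
rewrite -(card_imset (pred_of_simpl (@predT (VT * bool)%type))
  (f := fun q : VT * bool => (q.1, (q.1.1, q.2)))); last first.
  by move=> [a b] [c e] /= [] -> _ ->.
apply: subset_leq_card; apply/subsetP => p /imsetP [[a b] _ ->].
by rewrite !inE /ee /= eqxx.
Qed.

End Constr.

Theorem mainTheorem9 (k d : nat) :
  (k < d)%N -> ~~ odd d -> odd k ->
  forall eps : rat, (0 < eps)%R ->
  exists (T : finType) (e : rel T),
    [/\ simple_graph e, (0 < #|T|)%N, (avg_degree e <= d%:R)%R &
        ((alpha_k e k)%:R / #|T|%:R < (k.+1)%:R / (d.+2)%:R + eps)%R].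
Proof.
move=> kd ed ok eps epos.
pose m := (d./2).+1.
have cT : #|{: 'I_m * bool}| = d.+2.
  rewrite card_prod card_ord card_bool /m -(odd_double_half d) (negbTE ed) add0n.
  by rewrite doubleK -muln2 mulSn mulnC.
exists ('I_m * bool)%type, (@ee m); split.
- exact: ee_simple.
- by rewrite cT.
- rewrite /avg_degree /n_edges cT ler_pdivrMr ?ltr0n // -natrM ler_nat.
  have := nedges_bound m; rewrite cT.
  set N := #|_|; have := leq_divM N 2 => h1 h2; rewrite mulnC.
  apply: leq_trans h1 _; rewrite -(leq_add2r (d.+2 * 2)); apply: leq_trans h2 _.
  by rewrite [d.+2 * 2]mulnC -mulnDl addn2.
rewrite cT; apply: (@le_lt_trans _ _ ((k.+1)%:R / (d.+2)%:R)%R); last by rewrite ltrDl.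
  rewrite ler_pM2r ?invr_gt0 ?ltr0n // ler_nat.
  rewrite /alpha_k; apply/bigmax_leqP => S hS; exact: (@kind_bound m k S ok hS).
Qed.
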